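(* For all closed terms $s,t\in T(\Sigma_{FTP_/})$: if $s/c^n\sim t/c^n$ for all $n\in\mathbb N$, then $s\sim t$ (i.e. the Approximation Induction Principle $x=y$ if $x/c^n=y/c^n$ for all $n$ is sound for bisimilarity on $T(\Sigma_{FTP_/})$).
   Context: Fix a finite nonempty set $\mathcal A$ of actions, a finite set $\mathcal P$ of predicates, a subset $\mathcal P^I\subseteq\mathcal P$ of implicit predicates, and for each $P\in\mathcal P^I$ a set $\mathcal A_P\subseteq\mathcal A$. $\Sigma_{FTP_/}$ consists of $\delta$, constants $\kappa_P$ ($P\in\mathcal P$), unary prefixes $a.\_$ ($a\in\mathcal A$), binary $+$ and binary $\cdot/\cdot$. Semantics on closed terms: the least transition and predicate relations closed under: $a.x\xrightarrow{a}x$; $x\xrightarrow{a}x'\Rightarrow x+y\xrightarrow{a}x'$; $y\xrightarrow{a}y'\Rightarrow x+y\xrightarrow{a}y'$; $P\kappa_P$; $Px\Rightarrow P(x+y)$; $Py\Rightarrow P(x+y)$; $Px\Rightarrow P(a.x)$ for $P\in\mathcal P^I$, $a\in\mathcal A_P$; $x\xrightarrow{a}x'$ and $h\xrightarrow{c'}h'\Rightarrow x/h\xrightarrow{a}x'/h'$ for all actions $a,c'$; $Px\Rightarrow P(x/h)$. A fixed action $c$ is used: $c^0=\delta$, $c^{n+1}=c.c^n$. Bisimilarity $\sim$: largest symmetric relation $R$ with $(s,t)\in R$, $s\xrightarrow{a}s'$ implying $t\xrightarrow{a}t'$ for some $t'$ with $(s',t')\in R$, and $Ps$ implying $Pt$.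 *)

(* Defs.v *)
From mathcomp Require Import all_boot.
Set Implicit Arguments.
Unset Strict Implicit.
Unset Printing Implicit Defensive.

Inductive term (A Pr : Type) : Type :=
  | Delta : term A Pr
  | Kappa : Pr -> term A Pr
  | Pre : A -> term A Pr -> term A Pr
  | Plus : term A Pr -> term A Pr -> term A Pr
  | Div : term A Pr -> term A Pr -> term A Pr.

Arguments Delta {A Pr}.
Arguments Kappa {A Pr}.

Inductive step (A Pr : Type) : term A Pr -> A -> term A Pr -> Prop :=
  | step_pre a x : step (Pre a x) a x
  | step_plusl a x x' y : step x a x' -> step (Plus x y) a x'
  | step_plusr a x y y' : step y a y' -> step (Plus x y) a y'
  | step_div a c' x x' h h' :
      step x a x' -> step h c' h' -> step (Div x h) a (Div x' h').

(* predicate relation P x; imp = the implicit predicates P^I,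
   AP P = the set A_P (only relevant when P is implicit) *)
Inductive holds (A Pr : Type) (imp : Pr -> bool) (AP : Pr -> A -> bool)
  : Pr -> term A Pr -> Prop :=
  | holds_kappa P : holds imp AP P (Kappa P)
  | holds_plusl P x y : holds imp AP P x -> holds imp AP P (Plus x y)
  | holds_plusr P x y : holds imp AP P y -> holds imp AP P (Plus x y)
  | holds_pre P a x : imp P -> AP P a -> holds imp AP P x ->
      holds imp AP P (Pre a x)
  | holds_div P x h : holds imp AP P x -> holds imp AP P (Div x h).

Fixpoint cpow (A Pr : Type) (c : A) (n : nat) : term A Pr :=
  match n with
  | 0 => Delta
  | n.+1 => Pre c (cpow Pr c n)
  end.

Definition bisimulation (A Pr : Type) (imp : Pr -> bool) (AP : Pr -> A -> bool)
  (R : term A Pr -> term A Pr -> Prop) : Prop :=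
  (forall s t, R s t -> R t s) /\
  (forall s t, R s t -> forall a s', step s a s' ->
      exists t', step t a t' /\ R s' t') /\
  (forall s t, R s t -> forall P, holds imp AP P s -> holds imp AP P t).

Definition bisimilar (A Pr : Type) (imp : Pr -> bool) (AP : Pr -> A -> bool)
  (s t : term A Pr) : Prop :=
  exists R, bisimulation imp AP R /\ R s t.

(* Main.v *)
Require Import Defs.
From mathcomp Require Import all_boot.
From Stdlib Require List Classical Lia.

Section S.
Variables (A Pr : finType) (imp : Pr -> bool) (AP : Pr -> A -> bool).

Notation bis := (bisimilar imp AP).

Lemma bis_sym x y : bis x y -> bis y x.
Proof. intros [R [[Hs [Ht Hp]] HR]]. exists R. split; [split; [|split]|]; auto. Qed.

Lemma bis_step x y a x' : bis x y -> step x a x' -> exists y', step y a y' /\ bis x' y'.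
Proof.
  intros [R [[Hs [Ht Hp]] HR]] H. destruct (Ht _ _ HR _ _ H) as [y' [H1 H2]].
  exists y'. split; auto. exists R. split; [split; [|split]|]; auto.
Qed.
Arguments bis_step {x y a x'}.

Lemma bis_holds x y P : bis x y -> holds imp AP P x -> holds imp AP P y.
Proof. intros [R [[Hs [Ht Hp]] HR]] H. eauto. Qed.

Lemma holds_div_inv P x h : holds imp AP P (Div x h) -> holds imp AP P x.
Proof. intros H. inversion H; subst; auto. Qed.

Lemma step_div_inv (x h : term A Pr) a z : step (Div x h) a z ->
  exists x' c' h', z = Div x' h' /\ step x a x' /\ step h c' h'.
Proof. intros H. inversion H; subst. eauto 6. Qed.
Arguments step_div_inv {x h a z}.

Lemma step_pre_inv b (x : term A Pr) a z : step (Pre b x) a z -> a = b /\ z = x.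
Proof. intros H. inversion H; subst; auto. Qed.
Arguments step_pre_inv {b x a z}.

Lemma step_delta a z : ~ step (@Delta A Pr) a z.
Proof. intros H. inversion H. Qed.

Variable c : A.
Notation cp := (cpow Pr c).

Lemma bis_mono x y m n : (n <= m)%coq_nat -> bis (Div x (cp m)) (Div y (cp m)) ->
  bis (Div x (cp n)) (Div y (cp n)).
Proof.
  intros Hnm Hb.
  exists (fun u v => exists x y n m, (n <= m)%coq_nat /\ u = Div x (cp n) /\ v = Div y (cp n)
     /\ bis (Div x (cp m)) (Div y (cp m))).
  split; [split; [|split]|].
  - intros u v [x0 [y0 [n0 [m0 [H1 [-> [-> H2]]]]]]].
    exists y0, x0, n0, m0. repeat split; auto. apply bis_sym; auto.
  - intros u v [x0 [y0 [n0 [m0 [H1 [-> [-> H2]]]]]]] a u' Hs.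
    destruct (step_div_inv Hs) as [x' [c' [h' [-> [Hx Hh]]]]].
    destruct n0 as [|n1]; [exfalso; eapply step_delta; eauto|].
    destruct (step_pre_inv Hh) as [-> ->].
    destruct m0 as [|m1]; [Lia.lia|].
    have Hs2 : step (Div x0 (cp m1.+1)) a (Div x' (cp m1)) by apply step_div with c; auto; try apply step_pre.
    destruct (bis_step H2 Hs2) as [z [Hz Hbz]].
    destruct (step_div_inv Hz) as [y' [c'' [h'' [-> [Hy Hh2]]]]].
    destruct (step_pre_inv Hh2) as [-> ->].
    exists (Div y' (cp n1)). split.
    + apply step_div with c; auto; try apply step_pre.
    + exists x', y', n1, m1. repeat split; auto. Lia.lia.
  - intros u v [x0 [y0 [n0 [m0 [H1 [-> [-> H2]]]]]]] P HP.
    apply holds_div. apply holds_div_inv with (cp m0).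
    eapply bis_holds; eauto. apply holds_div. eapply holds_div_inv; eauto.
  - exists x, y, n, m. auto.
Qed.

Fixpoint derivs (t : term A Pr) : list (A * term A Pr) :=
  match t with
  | Delta => nil
  | Kappa _ => nil
  | Pre a x => (a, x) :: nil
  | Plus x y => List.app (derivs x) (derivs y)
  | Div x h => List.flat_map (fun p => List.map (fun q => (p.1, Div p.2 q.2)) (derivs h)) (derivs x)
  end.

Lemma derivs_complete t a t' : step t a t' -> List.In (a, t') (derivs t).
Proof.
  induction 1; simpl; auto.
  - apply List.in_or_app; auto.
  - apply List.in_or_app; auto.
  - apply List.in_flat_map. exists (a, x'). split; auto.
    apply (List.in_map (fun q : A * term A Pr => (a, Div x' q.2)) _ (c', h')); auto.
Qed.

Lemma derivs_sound t a t' : List.In (a, t') (derivs t) -> step t a t'.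
Proof.
  revert a t'; induction t; simpl; intros a' t' H; try contradiction.
  - destruct H as [H|[]]. inversion H; subst. apply step_pre.
  - destruct (List.in_app_or _ _ _ H); [apply step_plusl|apply step_plusr]; auto.
  - apply List.in_flat_map in H. destruct H as [[b x'] [H1 H2]].
    apply List.in_map_iff in H2. destruct H2 as [[c' h'] [H3 H4]]. simpl in H3.
    inversion H3; subst. apply step_div with c'; auto.
Qed.

Lemma pigeon (T : Type) (Q : nat -> T -> Prop) (L : list T) :
  (forall x n m, (n <= m)%coq_nat -> Q m x -> Q n x) ->
  (forall n, exists y, List.In y L /\ Q n y) ->
  exists y, List.In y L /\ forall n, Q n y.
Proof.
  intros Hmon. induction L as [|y L IH]; intros H.
  - destruct (H 0) as [y [[] _]].
  - destruct (Classical_Prop.classic (forall n, Q n y)) as [Hy|Hy].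
    + exists y. split; simpl; auto.
    + apply Classical_Pred_Type.not_all_ex_not in Hy. destruct Hy as [n0 Hn0].
      destruct IH as [z [Hz1 Hz2]].
      * intros n. destruct (H (Nat.max n n0)) as [w [[<-|Hw1] Hw2]].
        -- exfalso. apply Hn0. eapply Hmon; [|exact Hw2]. Lia.lia.
        -- exists w. split; auto. eapply Hmon; [|exact Hw2]. Lia.lia.
      * exists z. split; simpl; auto.
Qed.

Lemma lemma4_aux (s t : term A Pr) :
  (forall n : nat, bisimilar imp AP (Div s (cpow Pr c n)) (Div t (cpow Pr c n))) ->
  bisimilar imp AP s t.
Proof.
  intros H.
  exists (fun u v => forall n, bisimilar imp AP (Div u (cpow Pr c n)) (Div v (cpow Pr c n))).
  split; [split; [|split]|]; auto.
  - intros u v Huv n. apply bis_sym; auto.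
  - intros u v Huv a u' Hs.
    have Hex : forall n, exists y, List.In y (derivs v) /\
        (y.1 = a /\ bisimilar imp AP (Div u' (cpow Pr c n)) (Div y.2 (cpow Pr c n))).
    { intros n.
      have Hs2 : step (Div u (cpow Pr c n.+1)) a (Div u' (cpow Pr c n))
        by apply step_div with c; auto; try apply step_pre.
      destruct (bis_step (Huv n.+1) Hs2) as [z [Hz Hbz]].
      destruct (step_div_inv Hz) as [y' [c'' [h'' [-> [Hy Hh2]]]]].
      destruct (step_pre_inv Hh2) as [-> ->].
      exists (a, y'). split; [apply derivs_complete; auto|]. simpl. auto. }
    apply pigeon in Hex.
    + destruct Hex as [[b v'] [Hin Hall]]. simpl in Hall.
      destruct (Hall 0) as [-> _]. exists v'. split.
      * apply derivs_sound; auto.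
      * intros n. apply Hall.
    + intros y n m Hnm [H1 H2]. split; auto. eapply bis_mono; eauto.
  - intros u v Huv P HP.
    apply (@holds_div_inv _ _ (cpow Pr c 0)). eapply bis_holds; [apply Huv|].
    apply holds_div; auto.
Qed.

End S.

Theorem lemma4 (A Pr : finType) (imp : Pr -> bool) (AP : Pr -> A -> bool)
  (c : A) (s t : term A Pr) :
  (forall n : nat, bisimilar imp AP (Div s (cpow Pr c n)) (Div t (cpow Pr c n))) ->
  bisimilar imp AP s t.
Proof. exact: lemma4_aux. Qed.
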